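(* Let $H$ be a finite-dimensional Hopf algebra over a field $\Bbbk$ and $B$ a right $H$-comodule algebra. A $B$-module $M$ is isomorphic to the zero object in $\mathcal{C}(B,H)$ if and only if $M$ is a direct summand (as a $B$-module) of $M\otimes H$.
   Context: $H$ has comultiplication $\Delta(h)=\sum h_1\otimes h_2$, counit $\epsilon$, antipode $S$. A right $H$-comodule algebra is a unital $\Bbbk$-algebra $B$ with an algebra map $\Delta_B:B\to B\otimes H$, $\Delta_B(b)=\sum b_1\otimes b_2$, which is coassociative and counital ($(\mathrm{Id}_B\otimes\epsilon)\Delta_B=\mathrm{Id}_B$, $(\mathrm{Id}_B\otimes\Delta)\Delta_B=(\Delta_B\otimes\mathrm{Id}_H)\Delta_B$) and unital. For a $B$-module $M$ and an $H$-module $U$, $M\otimes U$ is a $B$-module via $b\cdot(x\otimes u)=\sum b_1x\otimes b_2u$; in particular $M\otimes H$ (with $H$ the left regular module). A morphism of $B$-modules is called null-homotopic if it factors through a $B$-module of the form $N\otimes H$ for some $B$-module $N$. The category $\mathcal{C}(B,H)$ is the quotient of the category of $B$-modules by the ideal of null-homotopic morphisms (same objects; morphisms are $B$-module maps modulo null-homotopic ones). *)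

(* Defs.v *)
From HB Require Import structures.
From mathcomp Require Import all_boot all_order all_algebra all_field.
Set Implicit Arguments. Unset Strict Implicit. Unset Printing Implicit Defensive.
Import GRing.Theory.
Local Open Scope ring_scope.

(* We fix the basis  e := vbasis {:H}  of H (of size n := \dim {:H}).  For any
   space V, an element of V (x) H is written uniquely as  sum_i v_i (x) e_i,
   so V (x) H is encoded as  {ffun 'I_n -> V}  (t encodes sum_i t i (x) e_i).
   Iterating, V (x) H (x) H = (V (x) H) (x) H is {ffun 'I_n -> {ffun 'I_n -> V}},
   s encoding  sum_{m,j} s m j (x) e_j (x) e_m. *)

Section HopfTensor.
Variables (K : fieldType) (H : falgType K).

Definition hdim : nat := \dim (fullv : {vspace H}).
Definition hb : hdim.-tuple H := vbasis fullv.
Definition hcoord (j : 'I_hdim) (h : H) : K := coord hb j h.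

Definition tens (V : Type) := {ffun 'I_hdim -> V}.

(* product in A (x) H, for a K-algebra A:
   (sum_i a_i (x) e_i)(sum_j b_j (x) e_j) = sum_{i,j} a_i b_j (x) e_i e_j *)
Definition tmul (A : lalgType K) (a b : tens A) : tens A :=
  [ffun k => \sum_i \sum_j hcoord k (tnth hb i * tnth hb j) *: (a i * b j)].

Definition tone (A : lalgType K) : tens A := [ffun k => hcoord k 1 *: 1].

Definition id_tens_comul (V : lmodType K) (Delta : H -> tens H) (t : tens V)
  : tens (tens V) :=
  [ffun m => [ffun j => \sum_k hcoord j (Delta (tnth hb k) m) *: t k]].

Definition map_tens (V W : Type) (f : V -> W) (t : tens V) : tens W :=
  [ffun k => f (t k)].

Definition id_tens_counit (V : lmodType K) (eps : H -> K) (t : tens V) : V :=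
  \sum_k eps (tnth hb k) *: t k.

Record hopf_algebra (Delta : H -> tens H) (eps : H -> K) (S : H -> H) : Prop := {
  comul_linear : forall (a : K) (x y : H) k,
      Delta (a *: x + y) k = a *: Delta x k + Delta y k;
  counit_linear : forall (a : K) (x y : H), eps (a *: x + y) = a * eps x + eps y;
  antipode_linear : forall (a : K) (x y : H), S (a *: x + y) = a *: S x + S y;
  coassoc : forall h,
      map_tens Delta (Delta h) = id_tens_comul Delta (Delta h);
  counit_r : forall h, id_tens_counit eps (Delta h) = h;
  counit_l : forall h, \sum_k eps (Delta h k) *: tnth hb k = h;
  comul_mul : forall x y, Delta (x * y) = tmul (Delta x) (Delta y);
  comul_one : Delta 1 = tone H;
  counit_mul : forall x y, eps (x * y) = eps x * eps y;
  counit_one : eps 1 = 1;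
  antipode_l : forall h, \sum_k S (Delta h k) * tnth hb k = eps h *: 1;
  antipode_r : forall h, \sum_k Delta h k * S (tnth hb k) = eps h *: 1
}.

Record comodule_algebra (Delta : H -> tens H) (eps : H -> K)
  (B : algType K) (DeltaB : B -> tens B) : Prop := {
  coact_linear : forall (a : K) (x y : B) k,
      DeltaB (a *: x + y) k = a *: DeltaB x k + DeltaB y k;
  coact_mul : forall x y, DeltaB (x * y) = tmul (DeltaB x) (DeltaB y);
  coact_one : DeltaB 1 = tone B;
  coact_counit : forall b, id_tens_counit eps (DeltaB b) = b;
  coact_coassoc : forall b,
      map_tens DeltaB (DeltaB b) = id_tens_comul Delta (DeltaB b)
}.

Section Modules.
Variables (B : algType K) (DeltaB : B -> tens B).

(* B-action on N (x) H :  b.(x (x) h) = sum b_1 x (x) b_2 h *)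
Definition tact (N : lmodType B) (b : B) (x : tens N) : tens N :=
  [ffun k => \sum_i \sum_j
     ((hcoord k (tnth hb i * tnth hb j))%:A : B) *: (DeltaB b i *: x j)].

Definition bmod_hom (M M' : lmodType B) (f : M -> M') : Prop :=
  (forall x y, f (x + y) = f x + f y) /\ (forall b x, f (b *: x) = b *: f x).
Definition bmod_hom_to_tens (M N : lmodType B) (f : M -> tens N) : Prop :=
  (forall x y, f (x + y) = f x + f y) /\ (forall b x, f (b *: x) = tact b (f x)).
Definition bmod_hom_from_tens (N M : lmodType B) (f : tens N -> M) : Prop :=
  (forall x y, f (x + y) = f x + f y) /\ (forall b x, f (tact b x) = b *: f x).

Definition null_homotopic (M M' : lmodType B) (f : M -> M') : Prop :=
  exists (N : lmodType B) (u : M -> tens N) (v : tens N -> M'),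
    bmod_hom_to_tens u /\ bmod_hom_from_tens v /\ forall x, f x = v (u x).

(* M and M' are isomorphic in the quotient category C(B,H): there are
   B-module maps f, g whose composites agree with the identities modulo
   null-homotopic morphisms. *)
Definition iso_CBH (M M' : lmodType B) : Prop :=
  exists (f : M -> M') (g : M' -> M),
    bmod_hom f /\ bmod_hom g /\
    null_homotopic (fun x => g (f x) - x) /\
    null_homotopic (fun y => f (g y) - y).

Definition summand_of_tens (M : lmodType B) : Prop :=
  exists (i : M -> tens M) (p : tens M -> M),
    bmod_hom_to_tens i /\ bmod_hom_from_tens p /\ forall x, p (i x) = x.

End Modules.
End HopfTensor.

Definition zero_bmod (B : nzRingType) : lmodType B := 'rV[B]_0.

(* Main.v *)
Require Import Defs.
From HB Require Import structures.
From mathcomp Require Import all_boot all_order all_algebra all_field.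
From mathcomp Require Import ring.
Set Implicit Arguments. Unset Strict Implicit. Unset Printing Implicit Defensive.
Import GRing.Theory.
Local Open Scope ring_scope.

Section P.
Variables (K : fieldType) (H : falgType K)
  (Delta : H -> tens H H) (eps : H -> K) (S : H -> H)
  (hH : hopf_algebra Delta eps S).

Local Notation e i := (tnth (hb H) i).

Lemma coE (h : H) : h = \sum_i hcoord i h *: e i.
Proof.
rewrite {1}(@coord_vbasis _ _ h fullv) ?memvf //.
by apply: eq_bigr => i _; rewrite /hcoord (tnth_nth 0).
Qed.

Lemma coD l (a : K) (x y : H) : hcoord l (a *: x + y) = a * hcoord l x + hcoord l y.
Proof. by rewrite /hcoord linearD linearZ. Qed.

Lemma co_sum l (I : Type) (r : seq I) (P : pred I) (F : I -> H) :
  hcoord l (\sum_(i <- r | P i) F i) = \sum_(i <- r | P i) hcoord l (F i).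
Proof. by rewrite /hcoord linear_sum. Qed.

Lemma coZ l (a : K) (x : H) : hcoord l (a *: x) = a * hcoord l x.
Proof. by rewrite /hcoord linearZ. Qed.

Lemma co_e l k : hcoord l (e k) = (k == l)%:R.
Proof.
rewrite /hcoord (tnth_nth 0) coord_free //.
exact: basis_free (vbasisP _).
Qed.

Lemma Delta_lin : (forall m, Delta 0 m = 0) /\
  (forall m x y, Delta (x + y) m = Delta x m + Delta y m) /\
  (forall m a x, Delta (a *: x) m = a *: Delta x m).
Proof.
have D0 m : Delta 0 m = 0.
  have := comul_linear hH 1 0 0 m; rewrite !scale1r addr0 => h.
  by apply: (addrI (Delta 0 m)); rewrite addr0 -h.
split=> //; split=> [m x y|m a x].
  by have := comul_linear hH 1 x y m; rewrite !scale1r.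
by have := comul_linear hH a x 0 m; rewrite !addr0 D0 addr0.
Qed.

Lemma Delta_sum m (I : Type) (r : seq I) (P : pred I) (F : I -> H) :
  Delta (\sum_(i <- r | P i) F i) m = \sum_(i <- r | P i) Delta (F i) m.
Proof.
case: Delta_lin => D0 [DD _].
exact: (big_morph (fun x => Delta x m) (DD m) (D0 m)).
Qed.

Lemma DeltaZ m a x : Delta (a *: x) m = a *: Delta x m.
Proof. by case: Delta_lin => _ [_ ->]. Qed.

Lemma eps_lin : eps 0 = 0 /\ (forall x y, eps (x + y) = eps x + eps y) /\
  (forall a x, eps (a *: x) = a * eps x).
Proof.
have E0 : eps 0 = 0.
  have := counit_linear hH 1 0 0; rewrite !scale1r addr0 mul1r => h.
  by apply: (addrI (eps 0)); rewrite addr0 -h.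
split=> //; split=> [x y|a x].
  by have := counit_linear hH 1 x y; rewrite !scale1r mul1r.
by have := counit_linear hH a x 0; rewrite !addr0 E0 addr0.
Qed.

Lemma eps_sum (I : Type) (r : seq I) (P : pred I) (F : I -> H) :
  eps (\sum_(i <- r | P i) F i) = \sum_(i <- r | P i) eps (F i).
Proof.
case: eps_lin => E0 [ED _].
exact: (big_morph eps ED E0).
Qed.

Definition cc l i j := hcoord l (e i * e j).
Definition DD k j m := hcoord j (Delta (e k) m).

Lemma I1 l m a b :
  \sum_k cc k a b * DD k l m =
  \sum_i \sum_j \sum_a' \sum_b' cc l a' b' * cc m i j * DD a a' i * DD b b' j.
Proof.
have -> : \sum_k cc k a b * DD k l m = hcoord l (Delta (e a * e b) m).
  rewrite [e a * e b]coE Delta_sum co_sum; apply: eq_bigr => k _.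
  by rewrite DeltaZ coZ.
rewrite (comul_mul hH) /tmul ffunE co_sum; apply: eq_bigr => i _.
rewrite co_sum; apply: eq_bigr => j _.
rewrite coZ [Delta (e a) i]coE [Delta (e b) j]coE mulr_suml co_sum mulr_sumr.
apply: eq_bigr => a' _; rewrite mulr_sumr co_sum mulr_sumr; apply: eq_bigr => b' _.
rewrite -scalerAl -scalerAr !coZ /cc /DD; ring.
Qed.

Lemma I2 k l : \sum_m eps (e m) * DD k l m = (k == l)%:R.
Proof.
rewrite -co_e -{1}(counit_r hH (e k)) /id_tens_counit co_sum.
by apply: eq_bigr => m _; rewrite coZ.
Qed.

Lemma I4 i j : \sum_k eps (e k) * cc k i j = eps (e i) * eps (e j).
Proof.
rewrite -(counit_mul hH) [e i * e j]coE eps_sum; apply: eq_bigr => k _.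
case: eps_lin => _ [_ ->]; by rewrite mulrC.
Qed.

Lemma I3 k j : \sum_i hcoord i 1 * cc k i j = (j == k)%:R.
Proof.
rewrite -co_e.
have -> : e j = (\sum_i hcoord i 1 *: e i) * e j by rewrite -coE mul1r.
rewrite mulr_suml co_sum.
by apply: eq_bigr => i _; rewrite -scalerAl coZ.
Qed.


Lemma swap2out (V : nmodType) (G : 'I_(hdim H) -> 'I_(hdim H) -> 'I_(hdim H) -> V) :
  \sum_x \sum_y \sum_z G x y z = \sum_y \sum_z \sum_x G x y z.
Proof. rewrite exchange_big; apply: eq_bigr => y _; exact: exchange_big. Qed.

Variables (B : algType K) (DeltaB : B -> tens H B)
  (hB : comodule_algebra Delta eps DeltaB).

Section Mod.
Variable N : lmodType B.

Lemma algA (c d : K) (x : N) : c%:A *: (d%:A *: x) = (c * d)%:A *: x.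
Proof. by rewrite scalerA mulr_algl scalerA. Qed.
Lemma algC (c : K) (b : B) (x : N) : c%:A *: (b *: x) = b *: (c%:A *: x).
Proof. by rewrite !scalerA mulr_algl mulr_algr. Qed.
Lemma algZ (c : K) (b : B) (x : N) : (c *: b) *: x = c%:A *: (b *: x).
Proof. by rewrite scalerA mulr_algl. Qed.
Lemma alg_sum (F : 'I_(hdim H) -> K) (x : N) :
  (\sum_i F i)%:A *: x = \sum_i (F i)%:A *: x.
Proof. by rewrite !scaler_suml. Qed.
Lemma alg_delta (l : 'I_(hdim H)) (F : 'I_(hdim H) -> N) :
  \sum_k ((k == l)%:R)%:A *: F k = F l.
Proof.
rewrite (bigD1 l) //= eqxx !scale1r big1 ?addr0 // => k /negbTE ->.
by rewrite scale0r scale0r.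
Qed.
End Mod.

Lemma DeltaB_lin : (forall m, DeltaB 0 m = 0) /\
  (forall m x y, DeltaB (x + y) m = DeltaB x m + DeltaB y m) /\
  (forall m a x, DeltaB (a *: x) m = a *: DeltaB x m).
Proof.
have D0 m : DeltaB 0 m = 0.
  have := coact_linear hB 1 0 0 m; rewrite !scale1r addr0 => h.
  by apply: (addrI (DeltaB 0 m)); rewrite addr0 -h.
split=> //; split=> [m x y|m a x].
  by have := coact_linear hB 1 x y m; rewrite !scale1r.
by have := coact_linear hB a x 0 m; rewrite !addr0 D0 addr0.
Qed.

Lemma DeltaB_algM m (c : K) (x : B) : DeltaB (c%:A * x) m = c *: DeltaB x m.
Proof. by rewrite mulr_algl; case: DeltaB_lin => _ [_ ->]. Qed.

Lemma DeltaB_coassoc (b : B) i a :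
  DeltaB (DeltaB b i) a = \sum_k DD k a i *: DeltaB b k.
Proof.
have := congr1 (fun f : tens H (tens H B) => f i a) (coact_coassoc hB b).
by rewrite /map_tens /id_tens_comul !ffunE.
Qed.

Lemma tact0 (N : lmodType B) (b : B) : tact DeltaB b (0 : tens H N) = 0.
Proof.
apply/ffunP => k; rewrite !ffunE big1 // => i _; rewrite big1 // => j _.
by rewrite ffunE !scaler0.
Qed.

Lemma tact_alg (N : lmodType B) (c : K) (s : tens H N) :
  tact DeltaB c%:A s = [ffun k => c%:A *: s k].
Proof.
apply/ffunP => k; rewrite !ffunE.
have hD i : DeltaB c%:A i = (c * hcoord i 1)%:A.
  rewrite -[c%:A]mulr1 DeltaB_algM (coact_one hB) ffunE scalerA.
  by [].
under eq_bigr => i _ do under eq_bigr => j _ do rewrite hD algA.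
rewrite exchange_big /=.
rewrite -(alg_delta k (fun j => c%:A *: s j)).
apply: eq_bigr => j _; rewrite algA -alg_sum; congr (_%:A *: _).
rewrite -I3 mulr_suml; apply: eq_bigr => i _; rewrite /cc; ring.
Qed.


Lemma sum2E (V : nmodType) (F : 'I_(hdim H) -> 'I_(hdim H) -> {ffun 'I_(hdim H) -> V}) l :
  (\sum_i \sum_j F i j) l = \sum_i \sum_j F i j l.
Proof. rewrite sum_ffunE; apply: eq_bigr => i _; exact: sum_ffunE. Qed.

Lemma norm_term (N : lmodType B) (x y : K) (F G : 'I_(hdim H) -> K)
  (be : 'I_(hdim H) -> B) (t : 'I_(hdim H) -> N) :
  x%:A *: ((y *: \sum_k' F k' *: be k') *: \sum_k (G k)%:A *: t k) =
  \sum_k' \sum_k (x * (y * F k') * G k)%:A *: (be k' *: t k).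
Proof.
rewrite scaler_sumr scaler_suml scaler_sumr; apply: eq_bigr => k' _.
rewrite [y *: (_ *: _)]scalerA algZ !scaler_sumr; apply: eq_bigr => k _.
by rewrite -(algC (G k)) !algA.
Qed.

Lemma sum6 (V : nmodType) (F : 'I_(hdim H) -> 'I_(hdim H) -> 'I_(hdim H) ->
   'I_(hdim H) -> 'I_(hdim H) -> 'I_(hdim H) -> V) :
  \sum_i \sum_j \sum_a \sum_b \sum_c \sum_d F i j a b c d =
  \sum_c \sum_d \sum_i \sum_j \sum_a \sum_b F i j a b c d.
Proof.
under eq_bigr => i _ do under eq_bigr => j _ do under eq_bigr => a _ do rewrite swap2out.
under eq_bigr => i _ do under eq_bigr => j _ do rewrite swap2out.
under eq_bigr => i _ do rewrite swap2out.
by rewrite swap2out.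
Qed.

Lemma alg_sum_r (N : lmodType B) (F : 'I_(hdim H) -> K) (x : N) :
  \sum_i (F i)%:A *: x = (\sum_i F i)%:A *: x.
Proof. by rewrite alg_sum. Qed.

Definition Sm (N : lmodType B) (m : 'I_(hdim H)) (t : tens H N) : tens H N :=
  [ffun j => \sum_k (DD k j m)%:A *: t k].

Lemma tactE (N : lmodType B) b (s : tens H N) l :
  tact DeltaB b s l = \sum_i \sum_j (cc l i j)%:A *: (DeltaB b i *: s j).
Proof. by rewrite /tact ffunE. Qed.

Lemma SmE (N : lmodType B) m (t : tens H N) j :
  Sm m t j = \sum_k (DD k j m)%:A *: t k.
Proof. by rewrite /Sm ffunE. Qed.

Lemma Sm_tact (N : lmodType B) m b (t : tens H N) :
  Sm m (tact DeltaB b t) =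
  \sum_i \sum_j tact DeltaB ((cc m i j)%:A * DeltaB b i) (Sm j t).
Proof.
apply/ffunP => l; rewrite sum2E ffunE.
transitivity (\sum_a \sum_b' (\sum_k DD k l m * cc k a b')%:A *: (DeltaB b a *: t b')).
  under eq_bigr => k _ do rewrite ffunE scaler_sumr.
  under eq_bigr => k _ do under eq_bigr => a _ do rewrite scaler_sumr.
  rewrite swap2out.
  apply: eq_bigr => a _; apply: eq_bigr => b' _; rewrite alg_sum.
  by apply: eq_bigr => k _; rewrite algA.

symmetry.
under eq_bigr => i _ do under eq_bigr => j _ do rewrite tactE.
under eq_bigr => i _ do under eq_bigr => j _ do under eq_bigr => a _ do
  under eq_bigr => b' _ do rewrite DeltaB_algM DeltaB_coassoc SmE norm_term.
rewrite sum6.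
apply: eq_bigr => a _; apply: eq_bigr => b' _.
under eq_bigr => i _ do under eq_bigr => j _ do under eq_bigr => a0 _ do rewrite alg_sum_r.
under eq_bigr => i _ do under eq_bigr => j _ do rewrite alg_sum_r.
under eq_bigr => i _ do rewrite alg_sum_r.
rewrite alg_sum_r; congr (_%:A *: _).
rewrite [RHS](eq_bigr (fun k => cc k a b' * DD k l m)); last by move=> k _; rewrite mulrC.
rewrite I1; apply: eq_bigr => i _; apply: eq_bigr => j _; apply: eq_bigr => a' _;
  apply: eq_bigr => b'' _; rewrite /cc; ring.
Qed.


Lemma summand_through (M N : lmodType B) (u : M -> tens H N) (p : tens H N -> M) :
  bmod_hom_to_tens DeltaB u -> bmod_hom_from_tens DeltaB p ->
  (forall x, p (u x) = x) -> summand_of_tens DeltaB M.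
Proof.
move=> [uD uZ] [pD pZ] pu.
have p0 : p 0 = 0 by apply: (addrI (p 0)); rewrite -pD !addr0.
have psum (F : 'I_(hdim H) -> tens H N) : p (\sum_i F i) = \sum_i p (F i).
  exact: (big_morph p pD p0).
have SmD m (s s' : tens H N) : Sm m (s + s') = Sm m s + Sm m s'.
  apply/ffunP => j; rewrite [LHS]SmE [RHS]ffunE !SmE -big_split; apply: eq_bigr => k _.
  by rewrite ffunE scalerDr.
exists (fun x => [ffun m => p (Sm m (u x))]),
       (fun t => \sum_k (eps (e k))%:A *: t k).
split; [split|split; [split|]].
- by move=> x y; apply/ffunP => m; rewrite !ffunE uD SmD pD.
- move=> b x; apply/ffunP => m; rewrite ffunE uZ Sm_tact psum tactE.
  apply: eq_bigr => i _; rewrite psum; apply: eq_bigr => j _.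
  by rewrite pZ ffunE scalerA.
- move=> s s'; rewrite -big_split; apply: eq_bigr => k _.
  by rewrite ffunE scalerDr.
- move=> b s.
  under eq_bigr => k _ do rewrite tactE scaler_sumr.
  under eq_bigr => k _ do under eq_bigr => i _ do rewrite scaler_sumr.
  under eq_bigr => k _ do under eq_bigr => i _ do under eq_bigr => j _ do rewrite algA.
  rewrite swap2out.
  under eq_bigr => i _ do under eq_bigr => j _ do rewrite alg_sum_r I4.
  rewrite -[in RHS](coact_counit hB b) /id_tens_counit scaler_suml.
  apply: eq_bigr => i _; rewrite algZ !scaler_sumr; apply: eq_bigr => j _.
  by rewrite -algC !algA mulrC.
- move=> x.
  under eq_bigr => m _ do rewrite ffunE -pZ tact_alg.
  rewrite -psum -[RHS]pu; congr (p _).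
  apply/ffunP => l; rewrite sum_ffunE.
  under eq_bigr => m _ do rewrite ffunE SmE scaler_sumr.
  under eq_bigr => m _ do under eq_bigr => k _ do rewrite algA.
  rewrite exchange_big /=.
  under eq_bigr => k _ do rewrite alg_sum_r I2.
  exact: alg_delta.
Qed.

Lemma flat0 (y : zero_bmod B) : y = 0.
Proof. exact: thinmx0. Qed.

Lemma main_iff (M : lmodType B) :
  iso_CBH DeltaB M (zero_bmod B) <-> summand_of_tens DeltaB M.
Proof.
split.
- case=> f [g [[fD fZ] [[gD gZ] [[N [u [v [hu [[vD vZ] huv]]]]] _]]]].
  have g0 : g 0 = 0 by apply: (addrI (g 0)); rewrite -gD !addr0.
  apply: (@summand_through M N u (fun t => - v t)) => //.
  + split=> [x y|b x]; first by rewrite vD opprD.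
    by rewrite vZ scalerN.
  + by move=> x; rewrite -(huv x) (flat0 (f x)) g0 sub0r opprK.
- case=> i [p [[iD iZ] [hp hpi]]].
  exists (fun _ => 0), (fun _ => 0).
  split; first by split=> [x y|b x]; rewrite ?addr0 ?scaler0.
  split; first by split=> [x y|b x]; rewrite ?addr0 ?scaler0.
  split.
  + exists M, (fun x => i (- x)), p; split; last split => //.
      split=> [x y|b x]; first by rewrite opprD iD.
      by rewrite -iZ scalerN.
    by move=> x; rewrite hpi sub0r.
  + exists M, (fun _ => 0), (fun _ => 0); split; last split.
    * by split=> [x y|b x]; rewrite ?addr0 ?tact0.
    * by split=> [x y|b x]; rewrite ?addr0 ?scaler0.
    * by move=> y; rewrite (flat0 y) subr0.
Qed.

End P.

Theorem lemma2p7 (K : fieldType) (H : falgType K)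
  (Delta : H -> tens H H) (eps : H -> K) (S : H -> H)
  (hH : hopf_algebra Delta eps S)
  (B : algType K) (DeltaB : B -> tens H B)
  (hB : comodule_algebra Delta eps DeltaB)
  (M : lmodType B) :
  iso_CBH DeltaB M (zero_bmod B) <-> summand_of_tens DeltaB M.
Proof. exact: (main_iff hH hB M). Qed.
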